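(* For integers $m\ge1$ and $1\le j\le m-1$, $$d_{j+1,m}=\frac{2m+1}{j+1}\,d_{j,m}-\frac{(m+j)(m+1-j)}{j(j+1)}\,d_{j-1,m}.$$ Also $d_{m,m}=2^{-m}\binom{2m}{m}$ and $d_{m-1,m}=(2m+1)2^{-(m+1)}\binom{2m}{m}$.
   Context: $d_{l,m}=2^{-2m}\sum_{k=l}^{m}2^{k}\binom{2m-2k}{m-k}\binom{m+k}{m}\binom{k}{l}$ for $0\le l\le m$. *)

(* Defs.v *)
From HB Require Import structures.
From mathcomp Require Import all_boot all_order all_algebra.
Set Implicit Arguments. Unset Strict Implicit. Unset Printing Implicit Defensive.
Import Order.TTheory GRing.Theory Num.Theory.
Local Open Scope ring_scope.

Definition d (l m : nat) : rat :=
  (2%:R ^- (2 * m)%N) *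
  \sum_(l <= k < m.+1)
     (2%:R ^+ k * ('C((2 * m - 2 * k)%N, (m - k)%N) * 'C((m + k)%N, m)
                  * 'C(k, l))%:R).

(* Main.v *)
From Stdlib Require Import Lia ZArith Arith ArithRing.
Require Import Defs.
From HB Require Import structures.
From mathcomp Require Import all_boot all_order all_algebra.
Import Order.TTheory GRing.Theory Num.Theory.
Definition a (m k : nat) : nat := 2 ^ k * 'C(2 * m - 2 * k, m - k) * 'C(m + k, m).
Definition S (m l : nat) : nat := \sum_(0 <= k < m.+1) a m k * 'C(k, l).

Lemma binS' k l : k * 'C(k,l) = l * 'C(k,l) + l.+1 * 'C(k,l.+1).
Proof.
case: (leqP l k) => H.
  by rewrite mul_bin_left -mulnDl addnC subnK.
by rewrite !bin_small ?muln0 // ltnW.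
Qed.

Lemma binsym n k : 'C(n + k, n) = 'C(n + k, k).
Proof. by rewrite -{3}(addKn n k) bin_sub // leq_addr. Qed.

Lemma bin_central p : p.+1 * 'C(2 * p.+1, p.+1) = 2 * (2 * p).+1 * 'C(2 * p, p).
Proof.
have E1 : (2 * p.+1) * 'C((2 * p).+1, p) = p.+1 * 'C(2 * p.+1, p.+1).
  by rewrite -mul_bin_diag mulnS.
have E2 : (2 * p).+1 * 'C(2 * p, p) = p.+1 * 'C((2 * p).+1, p).
  rewrite mul_bin_diag /=.
  have -> : (2 * p).+1 = p.+1 + p by rewrite addSn mul2n -addnn.
  by rewrite -binsym.
apply/eqP; rewrite -(eqn_pmul2l (ltn0Sn p)); apply/eqP.
rewrite -E1 mulnA (mulnC 2 p.+1) -!mulnA E2.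
congr (_ * _); exact: mulnCA.
Qed.
Open Scope Z_scope.
Lemma termZ (m l k c0 c1 c2 : Z) : k* c0 = l* c0+(l+1)* c1 -> k* c1 = (l+1)* c1+(l+2)* c2 ->
 (m-l)*(m+l+1)* c0 + (l+1)*(l+2)* c2 + (2* m+1-2* k)*(l+1)* c1 = (2* m+1)*(l+1)* c1 + (m-k)*(m+k+1)* c0.
Proof.
intros H0 H1.
assert (E : (m-l)*(m+l+1)* c0 + (l+1)*(l+2)* c2 + (2* m+1-2* k)*(l+1)* c1 - ((2* m+1)*(l+1)* c1 + (m-k)*(m+k+1)* c0)
  = (k+l+1)*(k * c0 - (l* c0+(l+1)* c1)) - (l+1)*(k * c1 - ((l+1)* c1+(l+2)* c2))) by ring.
rewrite H0 H1 !Z.sub_diag !Z.mul_0_r in E. lia.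
Qed.
Close Scope Z_scope.
Lemma termN (m l k c0 c1 c2 : nat) : (l <= m)%N -> (k <= m)%N ->
  k* c0 = l* c0+(l.+1)* c1 -> k* c1 = (l.+1)* c1+(l.+2)* c2 ->
 (m-l)*(m+l+1)* c0 + (l.+1)*(l.+2)* c2 + (2* m+1-2* k)*(l.+1)* c1 = (2* m+1)*(l.+1)* c1 + (m-k)*(m+k+1)* c0.
Proof.
move=> /ssrnat.leP Hl /ssrnat.leP Hk H0 H1.
rewrite -[l.+2]addn2 -[l.+1]addn1 in H0 H1 *.
rewrite -!multE -!plusE -!minusE in H0 H1 *.
apply Nat2Z.inj.
rewrite !(Nat2Z.inj_mul, Nat2Z.inj_add) !Nat2Z.inj_sub; try lia.
rewrite !(Nat2Z.inj_mul, Nat2Z.inj_add).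
simpl Z.of_nat.
apply termZ.
- apply (f_equal Z.of_nat) in H0. rewrite !(Nat2Z.inj_mul, Nat2Z.inj_add) in H0. simpl in H0. rewrite H0. lia.
- apply (f_equal Z.of_nat) in H1. rewrite !(Nat2Z.inj_mul, Nat2Z.inj_add) in H1. simpl in H1. rewrite H1. lia.
Qed.
Lemma arec m k : k < m -> (m-k)*(m+k+1)*a m k = (k+1)*(2* m-2* k-1)*a m k.+1.
Proof.
move=> H.
have [p Ep] : exists p, m = k + p.+1.
  by exists (m - k).-1; rewrite prednK ?subn_gt0 // subnKC // ltnW.
have F1 : k.+1 * 'C((m+k).+1, m) = (m+k).+1 * 'C(m+k, m).
  by rewrite binsym -addnS binsym -mul_bin_diag addnS.
have e1 : m - k = p.+1 by rewrite Ep addKn.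
have e2 : 2 * m - 2 * k = 2 * p.+1 by rewrite -mulnBr e1.
have e3 : m - k.+1 = p by rewrite subnS e1.
have e4 : 2 * m - 2 * k.+1 = 2 * p by rewrite -mulnBr e3.
have e5 : 2 * m - 2 * k - 1 = (2 * p).+1 by rewrite e2 mulnS subn1.
rewrite /a e5 e1 e2 e3 e4 addnS.
transitivity ((m+k).+1 * 2^k * 'C(m + k, m) * (p.+1 * 'C(2 * p.+1, p.+1))).
  rewrite -!multE -!plusE; ring.
rewrite bin_central.
transitivity ((2 * p).+1 * 2^k.+1 * 'C(2 * p, p) * (k.+1 * 'C((m+k).+1, m))).
  rewrite F1 expnS -!multE -!plusE; ring.
rewrite (addnS m k) addn1 -!multE; ring.
Qed.

Definition g (m l k : nat) := k * (2 * m + 1 - 2 * k) * a m k * 'C(k.-1, l).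
Definition h (m l k : nat) := (m - k) * (m + k + 1) * a m k * 'C(k, l).

Lemma sum_h m l : \sum_(0 <= k < m.+1) h m l k = \sum_(0 <= k < m.+1) g m l k.
Proof.
rewrite big_nat_recr //= {2}/h subnn !mul0n addn0.
rewrite big_nat_recl //= {1}/g !mul0n add0n.
apply: eq_big_nat => k /andP[_ Hk].
rewrite /h arec // /g /=.
have -> : 2 * m + 1 - 2 * k.+1 = 2 * m - 2 * k - 1.
  move/ssrnat.leP: Hk => Hk. rewrite -!multE -!plusE -!minusE. lia.
by rewrite addn1.
Qed.

Lemma term m l k : l <= m -> k <= m ->
  (m - l) * (m + l + 1) * (a m k * 'C(k, l)) + l.+1 * l.+2 * (a m k * 'C(k, l.+2)) + g m l k
  = (2 * m + 1) * l.+1 * (a m k * 'C(k, l.+1)) + h m l k.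
Proof.
move=> Hl Hk.
have T := @termN m l k _ _ _ Hl Hk (binS' k l) (binS' k l.+1).
have M := mul_bin_diag k l.
rewrite /g /h.
move: T M. set c0 := 'C(k, l). set c1 := 'C(k, l.+1). set c2 := 'C(k, l.+2). set c' := 'C(k.-1, l).
set u := m - l. set v := 2 * m + 1 - 2 * k. set w := m - k. set A := a m k.
move=> T M.
transitivity (A * (u * (m + l + 1) * c0 + l.+1 * l.+2 * c2) + v * A * (k * c')).
  rewrite -!multE -!plusE; ring.
rewrite M.
transitivity (A * (u * (m + l + 1) * c0 + l.+1 * l.+2 * c2 + v * l.+1 * c1)).
  rewrite -!multE -!plusE; ring.
rewrite T. rewrite -!multE -!plusE; ring.
Qed.

Lemma mainN m l : l <= m ->
  (m - l) * (m + l + 1) * S m l + l.+1 * l.+2 * S m l.+2 = (2 * m + 1) * l.+1 * S m l.+1.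
Proof.
move=> Hl.
apply: (@addIn (\sum_(0 <= k < m.+1) g m l k)).
rewrite /S !big_distrr -!big_split /=.
rewrite [in RHS]big_split /= -sum_h -big_split /=.
apply: eq_big_nat => k /andP[_ Hk].
by apply: term.
Qed.

Lemma C2 n : 'C(2 * n.+1, n.+1) = 2 * 'C((2 * n).+1, n.+1).
Proof.
have -> : 2 * n.+1 = (2 * n).+2 by rewrite mulnS.
rewrite binS [in RHS]mul2n -[in RHS]addnn; congr (_ + _).
have -> : (2 * n).+1 = n.+1 + n by rewrite addSn mul2n -addnn.
by rewrite binsym.
Qed.

Lemma sumN n : (a n.+1 n * 'C(n, n) + a n.+1 n.+1 * 'C(n.+1, n) =
   2 ^ n.+1 * (2 * n.+1 + 1) * 'C((2 * n).+1, n.+1))%N.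
Proof.
rewrite /a !subnn bin0 binn subSnn binSn.
have -> : (2 * n.+1 - 2 * n = 2)%N by rewrite mulnS addnK.
have -> : (n.+1 + n = (2 * n).+1)%N by rewrite addSn mul2n -addnn.
have -> : (n.+1 + n.+1 = 2 * n.+1)%N by rewrite mul2n -addnn.
rewrite C2 bin1 expnS -!multE -!plusE; ring.
Qed.


Local Open Scope ring_scope.

Lemma dS' l m : d l m = 2%:R ^- (2 * m) *
   (\sum_(l <= k < m.+1) a m k * 'C(k, l))%:R.
Proof.
rewrite /d natr_sum; congr (_ * _); apply: eq_bigr => k _.
by rewrite /a !natrM natrX !mulrA.
Qed.

Lemma dS l m : (l <= m.+1)%N -> d l m = 2%:R ^- (2 * m) * (S m l)%:R.
Proof.
move=> Hl; rewrite dS' /S (@big_cat_nat _ _ _ l 0 m.+1) //=.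
rewrite [X in _ = _ * (X + _)%:R]big1_seq ?add0n // => k /andP[_].
rewrite mem_index_iota => /andP[_ Hk]. by rewrite bin_small ?muln0.
Qed.

Lemma aux (F : fieldType) (c S0 S1 S2 B C p q : F) : q != 0 -> p != 0 ->
  q * p * S2 = B * q * S1 - C * S0 -> c * S2 = B / p * (c * S1) - C / (q * p) * (c * S0).
Proof.
move=> q0 p0 E. have qp0 : q * p != 0 by rewrite mulf_neq0.
have -> : S2 = (B * q * S1 - C * S0) / (q * p) by rewrite -E mulrC mulKf.
rewrite mulrBl mulrBr; congr (_ - _).
  by rewrite [q * p]mulrC invfM (mulrAC B q S1) [_ * (p^-1 / q)]mulrA (mulrAC (B * S1) q) mulfK // (mulrAC B S1) mulrCA.
by rewrite mulrCA mulrACA [RHS]mulrACA [_^-1 * S0]mulrC.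
Qed.

Lemma pw (k j : nat) : (2%:R : rat) ^- (k + j) * 2%:R ^+ j = 2%:R ^- k.
Proof. by rewrite exprD invfM -mulrA mulVf ?mulr1 // expf_neq0 // pnatr_eq0. Qed.

Theorem mainTheorem14 :
  (forall m j : nat, (1 <= m)%N -> (1 <= j)%N -> (j <= m - 1)%N ->
     d j.+1 m =
       ((2 * m + 1)%:R / j.+1%:R) * d j m
       - (((m + j)%:R * (m + 1 - j)%:R) / (j%:R * j.+1%:R)) * d j.-1 m)
  /\ (forall m : nat, (1 <= m)%N ->
       d m m = 2%:R ^- m * 'C((2 * m)%N, m)%:R
       /\ d m.-1 m = (2 * m + 1)%:R * 2%:R ^- m.+1 * 'C((2 * m)%N, m)%:R).
Proof.
split.
  move=> m [//|l] Hm _ Hl.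
  have Hl2 : (l.+2 <= m)%N.
    move/ssrnat.leP: Hl => Hl. apply/ssrnat.leP. rewrite -minusE in Hl. lia.
  rewrite /= (@dS l.+2 m) ?(@dS l.+1 m) ?(@dS l m); try (apply: leq_trans Hl2; by rewrite ?leqW).
  apply: aux; rewrite ?pnatr_eq0 //.
  apply/eqP; rewrite eq_sym subr_eq; apply/eqP.
  rewrite -!natrM -natrD; congr (_%:R).
  rewrite -mainN; last by apply: leq_trans Hl2; rewrite leqW.
  by rewrite addnC (addnS m l) !addn1 subSS (mulnC (m - l)%N).
  all: try (apply/ssrnat.leP; move/ssrnat.leP: Hl2; lia).
move=> [//|n] _.
split.
  rewrite dS' big_nat1 /a !subnn bin0 binn !muln1 addnn -mul2n natrM natrX mulrA.
  by congr (_ * _); rewrite {1}mul2n -addnn pw.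
rewrite dS' big_nat_recr //= big_nat1 sumN.
rewrite C2 !natrM natrX !mulrA {1}mul2n -addnn pw.
have P : (2%:R : rat) ^- (n.+1 + 1) * 2%:R = 2%:R ^- n.+1.
  by rewrite -[X in _ * X](expr1 (2%:R : rat)) pw.
rewrite -(addn1 n.+1) -(mulrA _ _ 2%:R) P.
by rewrite (mulrC (2%:R ^- n.+1)).
Qed.
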